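(* Let $p$ be an odd prime, $S$ a finite $p$-group and $\mathcal{F}$ a saturated fusion system on $S$. Let $E_1$ and $E_2$ be distinct $\mathcal{F}$-essential subgroups of $S$ with $N_S(E_1)=N_S(E_2)$, and set $T=\mathrm{core}_{\mathcal{F}}(E_1,E_2)$. Suppose that: (1) $E_1$, $E_2$ and $T$ have rank at most $3$; (2) $O^{p'}(\mathrm{Out}_{\mathcal{F}}(E_1))\cong\mathrm{SL}_2(p)$ and it centralizes $T$; (3) there exists a subgroup $V$ with $T\le V\le E_1$ that is $\mathcal{F}$-characteristic in $E_1$, has sectional rank at most $3$, is contained in $C_{E_1}(T)T$, and is such that $V/T$ is a natural $\mathrm{SL}_2(p)$-module for $O^{p'}(\mathrm{Out}_{\mathcal{F}}(E_1))$. Then $T$ is abelian, $T\le Z(V)$, $|[V,V]|\le p$, and $T/[V,V]$ is cyclic.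
   Context: Rank: minimal size of a generating set; sectional rank at most $k$ means all subgroups have rank at most $k$. For $P\le S$, $\mathrm{Aut}_{\mathcal{F}}(P)=\mathrm{Hom}_{\mathcal{F}}(P,P)$, $\mathrm{Out}_{\mathcal{F}}(P)=\mathrm{Aut}_{\mathcal{F}}(P)/\mathrm{Inn}(P)$, $P^{\mathcal{F}}=\{P\alpha:\alpha\in\mathrm{Hom}_{\mathcal{F}}(P,S)\}$. $E\le S$ is $\mathcal{F}$-essential if $C_S(P)\le P$ and $|N_S(E)|\ge|N_S(P)|$ for all $P\in E^{\mathcal{F}}$, and $\mathrm{Out}_{\mathcal{F}}(E)$ has a strongly $p$-embedded subgroup. For $Q\le P$, $Q$ is $\mathcal{F}$-characteristic in $P$ if normalized by $\mathrm{Aut}_{\mathcal{F}}(P)$. For $\mathcal{F}$-essential $E_1,E_2$ with $N_S(E_1)=N_S(E_2)$, $\mathrm{core}_{\mathcal{F}}(E_1,E_2)$ is the largest subgroup of $E_1\cap E_2$ normalized by $\mathrm{Aut}_{\mathcal{F}}(E_1)$, $\mathrm{Aut}_{\mathcal{F}}(E_2)$ and $\mathrm{Aut}_{\mathcal{F}}(N_S(E_1))$. $O^{p'}(G)$ is the subgroup generated by the $p$-elements of $G$. A natural $\mathrm{SL}_2(p)$-module is the $2$-dimensional $\mathbb{F}_p$-module of $\mathrm{SL}_2(p)$ acting by matrix multiplication. *)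

(* Defs.v *)
From HB Require Import structures.
From mathcomp Require Import all_boot all_order all_algebra all_fingroup all_solvable.
Set Implicit Arguments. Unset Strict Implicit. Unset Printing Implicit Defensive.

Local Open Scope group_scope.

(* A "morphism candidate" is a finite function gT -> gT; the predicate
   F P f means: f restricted to P is an F-morphism P -> S
   (only the values of f on P matter, see axiom [fs_agree]). *)
Definition fusion_pred (gT : finGroupType) := {set gT} -> {ffun gT -> gT} -> bool.

Definition is_fusion_system (gT : finGroupType) (S : {group gT}) (F : fusion_pred gT) : Prop :=
  [/\
      (forall P f, F P f ->
         [/\ group_set P, P \subset S, (forall x y, x \in P -> y \in P -> f (x * y) = f x * f y),
             {in P &, injective f} & f @: P \subset S]),
      (forall (P : {group gT}) s, P \subset S -> s \in S -> F P [ffun x => x ^ s]),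
      (forall P f g, F P f -> F (f @: P) g -> F P [ffun x => g (f x)])
    & (* every morphism is an F-isomorphism onto its image followed by inclusion *)
      (forall P f, F P f -> (exists2 g, F (f @: P) g & {in P, forall x, g (f x) = x})) /\
      (forall P Q f, F P f -> group_set Q -> Q \subset P -> F Q f) /\
      (forall P (f g : {ffun gT -> gT}), F P f -> {in P, f =1 g} -> F P g)].

Definition AutF (gT : finGroupType) (F : fusion_pred gT) (P : {set gT}) : {set {perm gT}} :=
  [set a in Aut P | F P [ffun x => a x]].
Definition AutS (gT : finGroupType) (S P : {group gT}) : {set {perm gT}} :=
  (@conj_aut gT P) @: 'N_S(P).
Definition InnA (gT : finGroupType) (P : {group gT}) : {set {perm gT}} :=
  (@conj_aut gT P) @: P.
Definition OutF (gT : finGroupType) (F : fusion_pred gT) (P : {group gT}) :=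
  AutF F P / InnA P.

Definition in_Fclass (gT : finGroupType) (F : fusion_pred gT) (P Q : {set gT}) : Prop :=
  exists2 f, F P f & Q = f @: P.

Definition fully_normalized (gT : finGroupType) (S : {group gT}) (F : fusion_pred gT) (P : {set gT}) :=
  forall Q, in_Fclass F P Q -> #|'N_S(Q)| <= #|'N_S(P)|.
Definition fully_centralized (gT : finGroupType) (S : {group gT}) (F : fusion_pred gT) (P : {set gT}) :=
  forall Q, in_Fclass F P Q -> #|'C_S(Q)| <= #|'C_S(P)|.

(* N_phi = { g in N_S(P) | phi c_g phi^-1 in Aut_S(phi(P)) } *)
Definition Nphi (gT : finGroupType) (S : {group gT}) (P : {set gT}) (f : {ffun gT -> gT}) : {set gT} :=
  [set g in 'N_S(P) | [exists h in 'N_S(f @: P), [forall y in P, f (y ^ g) == f y ^ h]]].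

Definition saturated_fusion_system (gT : finGroupType) (p : nat) (S : {group gT}) (F : fusion_pred gT) : Prop :=
  [/\ is_fusion_system S F,
      (forall P : {group gT}, P \subset S -> fully_normalized S F P ->
         fully_centralized S F P /\ p.-Sylow(AutF F P) (AutS S P))
    &
      (forall P (f : {ffun gT -> gT}), F P f -> fully_centralized S F (f @: P) ->
         (exists2 f', F (Nphi S P f) f' & {in P, f' =1 f}))].

Definition Opp (T : finGroupType) (p : nat) (G : {set T}) : {set T} :=
  <<[set x in G | p.-elt x]>>.

Definition strongly_p_embedded (T : finGroupType) (p : nat) (H G : {set T}) : Prop :=
  [/\ H \proper G, p %| #|H| & forall x, x \in G :\: H -> ~~ (p %| #|H :&: H :^ x|)].

Definition F_essential (gT : finGroupType) (p : nat) (S : {group gT}) (F : fusion_pred gT) (E : {group gT}) : Prop :=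
  [/\ E \subset S,
      (forall P, in_Fclass F E P -> 'C_S(P) \subset P),
      fully_normalized S F E
    & exists H : {group coset_of (InnA E)}, strongly_p_embedded p H (OutF F E)].

Definition normalized_by (gT : finGroupType) (A : {set {perm gT}}) (Q : {set gT}) : bool :=
  A \subset 'N(Q | 'P).

Definition is_coreF (gT : finGroupType) (S : {group gT}) (F : fusion_pred gT) (E1 E2 T : {group gT}) : Prop :=
  let good (Q : {set gT}) :=
    [&& Q \subset E1 :&: E2, normalized_by (AutF F E1) Q, normalized_by (AutF F E2) Q
      & normalized_by (AutF F 'N_S(E1)) Q] in
  good T /\ forall Q : {group gT}, good Q -> Q \subset T.

Definition rank_le (gT : finGroupType) (G : {set gT}) (k : nat) : Prop :=
  exists2 X : {set gT}, #|X| <= k & <<X>> = G.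
Definition sectional_rank_le (gT : finGroupType) (G : {set gT}) (k : nat) : Prop :=
  forall H : {group gT}, H \subset G -> rank_le H k.

Definition SL2 (p : nat) : {set {'GL_2['F_p]}} :=
  [set g : {'GL_2['F_p]} | (\det (GLval g) == 1)%R].

(* V/T is a natural SL_2(p)-module for the group of automorphisms A
   (acting on V by permutations of gT) modulo I: there is an identification
   theta of V/T with the row space F_p^2 such that the induced action of A
   on V/T has kernel exactly I and image exactly SL_2(p) acting by matrix
   multiplication. *)
Definition natural_SL2_module (gT : finGroupType) (p : nat) (A I : {set {perm gT}})
    (V T : {set gT}) : Prop :=
  exists theta : gT -> 'rV['F_p]_2,
  [/\ (forall x y, x \in V -> y \in V -> theta (x * y) = (theta x + theta y)%R),
      theta @: V = [set: 'rV['F_p]_2],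
      [set x in V | theta x == 0%R] = T,
      (forall a, a \in A -> (exists2 g, g \in SL2 p &
          forall x, x \in V -> theta (a x) = mulmx (theta x) (GLval g))) /\
      (forall g, g \in SL2 p -> (exists2 a, a \in A &
          forall x, x \in V -> theta (a x) = mulmx (theta x) (GLval g)))
    & (forall a, a \in I -> forall x, x \in V -> theta (a x) = theta x) /\
      (forall a, a \in A -> (forall x, x \in V -> theta (a x) = theta x) -> a \in I)].

(* Main.v *)
Require Import Defs.
From HB Require Import structures.
From mathcomp Require Import all_boot all_order all_algebra all_fingroup all_solvable.
Set Implicit Arguments. Unset Strict Implicit. Unset Printing Implicit Defensive.
Local Open Scope group_scope.

Section Gen.
Variable gT : finGroupType.
Implicit Types G H N T : {group gT}.

Lemma abelem_gen_card (p : nat) (Y : {set gT}) :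
  prime p -> abelian <<Y>> -> (forall y, y \in Y -> y ^+ p = 1) ->
  #|<<Y>>| <= p ^ #|Y|.
Proof.
move=> pr_p.
have [n cY] : {n | #|Y| = n} by exists #|Y|.
elim: n Y cY => [|n IH] Y cY abY pY.
  by move/eqP: cY; rewrite cards_eq0 => /eqP ->; rewrite gen0 cards0 expn0 cards1.
case: (set_0Vmem Y) => [Y0 | [y Yy]]; first by rewrite Y0 cards0 in cY.
set Y' := Y :\ y.
have cY' : #|Y'| = n by rewrite /Y' (cardsD1 y) Yy in cY; case: cY.
have defY : Y = y |: Y' by rewrite setD1K.
have abY' : abelian <<Y'>> by apply: abelianS abY; rewrite genS // subsetDl.
have IHY := IH Y' cY' abY' (fun z Hz => pY z (subsetP (subsetDl Y [set y]) z Hz)).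
have eqG : <<Y>> = <[y]> <*> <<Y'>>.
  by rewrite joing_idl joing_idr /joing defY.
have cyY : <<Y'>> \subset 'C(<[y]>).
  have sY'Y : <<Y'>> \subset <<Y>> by rewrite genS // subsetDl.
  have syY : <[y]> \subset <<Y>> by rewrite cycle_subG mem_gen.
  exact: subset_trans sY'Y (subset_trans abY (centS syY)).
rewrite eqG (cent_joinEr cyY) cY expnS.
apply: (@leq_trans (#|<[y]>| * #|<<Y'>>|)).
  by rewrite mul_cardG leq_pmulr // cardG_gt0.
apply: leq_mul; last by rewrite -cY'.
by rewrite -orderE; apply: dvdn_leq; [apply: prime_gt0 | rewrite order_dvdn pY].
Qed.

Lemma small_pgroup_cyclic (p : nat) G :
  prime p -> p.-group G -> #|G| <= p -> cyclic G.
Proof.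
move=> pr_p pG leGp; have [k ek] := p_natP pG.
case: k ek => [|[|k]] ek.
- by move/eqP: ek; rewrite expn0 -trivg_card1 => /eqP ->; exact: cyclic1.
- by apply: prime_cyclic; rewrite ek expn1.
- rewrite ek in leGp; have := ltn_exp2l 1 k.+2 (prime_gt1 pr_p).
  by rewrite expn1 ltnNge leGp.
Qed.

End Gen.

Section Gen2.
Variable gT : finGroupType.
Implicit Types G H N T : {group gT}.

Lemma rank_Phi (p : nat) G k :
  prime p -> p.-group G -> rank_le G k -> #|G : 'Phi(G)| <= p ^ k.
Proof.
move=> pr_p pG [X cX genX].
have nPG : G \subset 'N('Phi(G)) by case/andP: (Phi_normal G).
have sXG : X \subset G by rewrite -genX subset_gen.
have sXN : X \subset 'N('Phi(G)) := subset_trans sXG nPG.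
have eQ : G / 'Phi(G) = <<coset 'Phi(G) @* X>> by rewrite -morphim_gen // genX.
rewrite -card_quotient // eQ.
have [abQ expQ] := abelemP pr_p (Phi_quotient_abelem pG).
have abQ' : abelian <<coset 'Phi(G) @* X>> by rewrite -eQ.
apply: leq_trans (abelem_gen_card pr_p abQ' _) _.
- move=> y Yy; apply: expQ; have : y \in <<coset 'Phi(G) @* X>> by exact: mem_gen.
  by rewrite -eQ.
rewrite leq_pexp2l ?prime_gt0 //; apply: leq_trans _ cX.
by rewrite morphimEsub // leq_imset_card.
Qed.

Lemma Phi_sub_of (p : nat) G N :
  p.-group G -> (forall u v, u \in G -> v \in G -> [~ u, v] \in N) ->
  (forall u, u \in G -> u ^+ p \in N) -> 'Phi(G) \subset N.
Proof.
move=> pG hC hP; rewrite (Phi_joing pG) join_subG; apply/andP; split.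
  rewrite gen_subG; apply/subsetP => _ /imset2P[u v Gu Gv ->]; exact: hC.
rewrite (MhoE 1 pG) gen_subG; apply/subsetP => _ /imsetP[u Gu ->].
by rewrite expn1 hP.
Qed.

Lemma cyclic_quo_small (p : nat) T H :
  prime p -> p.-group T -> H \subset T -> T \subset 'N(H) ->
  #|T : H <*> 'Phi(T)| <= p -> cyclic (T / H).
Proof.
move=> pr_p pT sHT nHT le.
apply: Phi_quotient_cyclic; apply: (small_pgroup_cyclic pr_p).
  by do 2 apply: quotient_pgroup.
have nPQ : T / H \subset 'N('Phi(T / H)) by case/andP: (Phi_normal (T / H)).
rewrite card_quotient //.
have sPT : 'Phi(T) \subset T := Phi_sub T.
have eP : 'Phi(T / H) = (H <*> 'Phi(T)) / H.
  by rewrite quotientYidl ?(subset_trans sPT) // (quotient_Phi pT nHT).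
change (#|T / H : 'Phi(T / H)| <= p); rewrite eP.
rewrite index_quotient_eq //.
- by rewrite subIset // joing_subl orbT.
- by rewrite join_subG sHT.
Qed.

Lemma odd_gen (g : gT) : odd #[g] -> g = (g ^+ 2) ^+ (#[g].+1)./2.
Proof.
move=> og; rewrite -expgM mul2n -[_.*2]/(_./2.*2) halfK /= og.
by rewrite subn0 expgS expg_order mulg1.
Qed.

End Gen2.
Import GRing.Theory.

Section Theta.
Variables (gT : finGroupType) (V : {group gT}) (R : zmodType) (theta : gT -> R).
Hypothesis thM : forall x y, x \in V -> y \in V -> theta (x * y) = (theta x + theta y)%R.

Lemma th1 : theta 1 = 0%R.
Proof.
have h := thM (group1 V) (group1 V); rewrite mulg1 in h.
by apply: (@addrI _ (theta 1)); rewrite addr0 -h.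
Qed.

Lemma thV x : x \in V -> theta x^-1 = (- theta x)%R.
Proof.
move=> Vx; apply/eqP; rewrite -addr_eq0 -thM ?groupV // mulVg th1 //.
Qed.

Lemma thX x n : x \in V -> theta (x ^+ n) = (theta x *+ n)%R.
Proof.
move=> Vx; elim: n => [|n IH]; first by rewrite expg0 th1 mulr0n.
by rewrite expgS thM ?groupX // IH mulrS.
Qed.

Lemma thJ x y : x \in V -> y \in V -> theta (x ^ y) = theta x.
Proof.
move=> Vx Vy; rewrite conjgE thM ?groupV ?groupM // thM // thV //.
by rewrite (addrC (theta x)) addKr.
Qed.

Lemma thR x y : x \in V -> y \in V -> theta [~ x, y] = 0%R.
Proof.
move=> Vx Vy; rewrite commgEl thM ?groupV ?groupJ // thV // thJ //.
by rewrite addNr.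
Qed.

End Theta.

Definition gm1 (p : nat) : {'GL_2['F_p]} := FinRing.unit ('M['F_p]_2) (@unitrN1 _).
Lemma gm1E p : GLval (gm1 p) = (-1)%R. Proof. by []. Qed.
Lemma gm1SL p : gm1 p \in SL2 p.
Proof. rewrite inE gm1E.
 have h : ((-1 : 'M['F_p]_2) = (-1)%:M)%R by rewrite raddfN.
 by rewrite h det_scalar expr2 mulrNN mulr1. Qed.
Lemma gm1act p (v : 'rV['F_p]_2) : mulmx v (GLval (gm1 p)) = (- v)%R.
Proof. by rewrite gm1E mulmxN mulmx1. Qed.
Theorem theorem2p9 (gT : finGroupType) (p : nat) (S : {group gT}) (F : fusion_pred gT)
    (E1 E2 T V : {group gT}) :
  prime p -> odd p -> p.-group S ->
  saturated_fusion_system p S F ->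
  F_essential p S F E1 -> F_essential p S F E2 -> E1 != E2 ->
  'N_S(E1) = 'N_S(E2) ->
  is_coreF S F E1 E2 T ->
  (* (1) *)
  rank_le E1 3 -> rank_le E2 3 -> rank_le T 3 ->
  (* (2) *)
  Opp p (OutF F E1) \isog SL2 p ->
  Opp p (OutF F E1) \subset 'C_(AutF F E1)(T | 'P) / InnA E1 ->
  (* (3) *)
  T \subset V -> V \subset E1 ->
  normalized_by (AutF F E1) V ->
  sectional_rank_le V 3 ->
  V \subset 'C_E1(T) * T ->
  natural_SL2_module p (Opp p (AutF F E1)) (InnA E1) V T ->
  [/\ abelian T, T \subset 'Z(V), #|[~: V, V]| <= p & cyclic (T / [~: V, V])].
Proof.
move=> pr_p odd_p pS sat essE1 essE2 neqE eqN core rkE1 rkE2 rkT isoOpp cOpp.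
move=> sTV sVE1 nV srkV sVCT nat.
have [isF _ _] := sat.
have [fsM fsS fsC [fsI [fsR fsA]]] := isF.
have [sE1S _ _ _] := essE1.
have pE1 : p.-group E1 := pgroupS sE1S pS.
have pV : p.-group V := pgroupS sVE1 pE1.
have pT : p.-group T := pgroupS sTV pV.
case: nat => theta [thM thIm thK [thA thA'] [thI thI']].
have inT : forall x, (x \in T) = (x \in V) && (theta x == 0%R).
  by move=> x; rewrite -thK inE.
have conjF : forall e, e \in E1 -> conj_aut E1 e \in AutF F E1.
  move=> e E1e; rewrite inE Aut_aut /=.
  apply: (fsA _ [ffun x => x ^ e]); first exact: fsS (subsetP sE1S e E1e).
  by move=> y E1y; rewrite !ffunE conj_autE.
have [goodT _] := core.
have /and4P[_ nTA _ _] := goodT.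
have nTE1 : forall e t, e \in E1 -> t \in T -> t ^ e \in T.
  move=> e t E1e Tt; have /astabsP h := subsetP nTA _ (conjF e E1e).
  have tE1 : t \in E1 := subsetP (subset_trans sTV sVE1) t Tt.
  by move: (h t); rewrite /= apermE conj_autE // Tt.
have nVE1 : forall e v, e \in E1 -> v \in V -> v ^ e \in V.
  move=> e v E1e Vv; have /astabsP h := subsetP nV _ (conjF e E1e).
  have vE1 : v \in E1 := subsetP sVE1 v Vv.
  by move: (h v); rewrite /= apermE conj_autE // Vv.
have vp0 : forall v : 'rV['F_p]_2, (v *+ p = 0)%R.
  by move=> v; rewrite -scaler_nat pchar_Fp_0 // scale0r.
have thP : forall x, x \in V -> theta (x ^+ p) = 0%R.
  by move=> x Vx; rewrite (thX thM) // vp0.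
have cC0T : 'C_V(T) \subset 'C(T) by apply: subsetIr.
have sC0V : 'C_V(T) \subset V by apply: subsetIl.
have defV : 'C_V(T) * T = V.
  apply/eqP; rewrite eqEsubset mul_subG //=.
  apply/subsetP => v Vv; have := subsetP sVCT v Vv.
  case/mulsgP => c t Cc Tt defv.
  have Vt : t \in V := subsetP sTV t Tt.
  have Vc : c \in V.
    have -> : c = v * t^-1 by rewrite defv mulgK.
    by rewrite groupM ?groupV.
  case/setIP: Cc => _ Cc.
  by rewrite defv mem_mulg // inE Vc.
have cpV : 'C_V(T) \* T = V by rewrite cprodE ?defV // centsC.
have zT : forall x, x \in 'C_V(T) -> theta x = 0%R -> x \in 'Z(T).
  move=> x /setIP[Vx Cx] th; rewrite /center; apply/setIP; split => //.
  by rewrite inT Vx th eqxx.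
have PhiC : 'Phi('C_V(T)) \subset 'Z(T).
  apply: (Phi_sub_of (pgroupS sC0V pV)).
    move=> u v Cu Cv; apply: zT; first by rewrite groupR.
    by rewrite (thR thM) // (subsetP sC0V).
  move=> u Cu; apply: zT; first by rewrite groupX.
  by rewrite thP // (subsetP sC0V).
have PhiV : 'Phi('C_V(T)) * 'Phi(T) = 'Phi(V).
  by case/cprodP: (Phi_cprod pV cpV).
have iVT : p ^ 2 <= #|V : T|.
  have -> : (p ^ 2)%N = #|[set: 'rV['F_p]_2]| by rewrite cardsT card_mx card_Fp.
  rewrite -thIm; apply: leq_trans (leq_imset_card (fun C => theta (repr C)) (rcosets T V)).
  apply: subset_leq_card; apply/subsetP => _ /imsetP[x Vx ->].
  apply/imsetP; exists (T :* x); first by apply/rcosetsP; exists x.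
  have := mem_repr x (rcoset_refl T x); case/rcosetP => t Tt ->.
  have /andP[_ /eqP th0] : (t \in V) && (theta t == 0%R) by rewrite -inT.
  by rewrite thM ?th0 ?add0r //; apply: (subsetP sTV).
have rkV : rank_le V 3 := srkV V (subxx _).
have iV := rank_Phi pr_p pV rkV.
have sNT : 'Z(T) <*> 'Phi(T) \subset T by rewrite join_subG center_sub Phi_sub.
have sPN : 'Phi(V) \subset 'Z(T) <*> 'Phi(T).
  by rewrite -PhiV mul_subG // ?joing_subr // (subset_trans PhiC) ?joing_subl.
have iTN : #|T : 'Z(T) <*> 'Phi(T)| <= p.
  have := Lagrange_index sTV sNT.
  have := dvdn_leq (indexg_gt0 _ _) (indexgS V sPN).
  move=> h1 h2; rewrite -(@leq_pmul2l (p ^ 2)%N) ?expn_gt0 ?prime_gt0 //.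
  rewrite -expnSr; apply: leq_trans iV; apply: leq_trans h1.
  by rewrite -h2 leq_mul2r iVT orbT.
have abT : abelian T.
  apply: cyclic_center_factor_abelian.
  apply: (cyclic_quo_small pr_p pT (center_sub T)) => //.
  by case/andP: (center_normal T).
have cTV : T \subset 'C(V).
  by rewrite -defV centM subsetI centsC cC0T; exact: abT.
have sTZ : T \subset 'Z(V) by rewrite /center subsetI sTV cTV.
have cZ : forall c v, c \in T -> v \in V -> commute v c.
  move=> c v Tc Vv; have h := centP (subsetP cTV c Tc) v Vv.
  by first [exact: h | exact: commute_sym h].
have inT2 : forall z, z \in V -> theta z = 0%R -> z \in T.
  by move=> z Vz th; rewrite inT Vz th eqxx.
have [x Vx thx] : exists2 x, x \in V & theta x = delta_mx (ord0 : 'I_1) (ord0 : 'I_2).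
  have : (delta_mx (ord0 : 'I_1) (ord0 : 'I_2) : 'rV['F_p]_2) \in theta @: V by rewrite thIm inE.
  by case/imsetP => x Vx ->; exists x.
have [y Vy thy] : exists2 y, y \in V & theta y = delta_mx (ord0 : 'I_1) (ord_max : 'I_2).
  have : (delta_mx (ord0 : 'I_1) (ord_max : 'I_2) : 'rV['F_p]_2) \in theta @: V by rewrite thIm inE.
  by case/imsetP => y Vy ->; exists y.
have sXYV : <[x]> <*> <[y]> \subset V by rewrite join_subG !cycle_subG Vx Vy.
have defV2 : (<[x]> <*> <[y]>) * T = V.
  apply/eqP; rewrite eqEsubset mul_subG //=.
  apply/subsetP => v Vv.
  pose w := x ^+ (theta v ord0 ord0 : nat) * y ^+ (theta v ord0 ord_max : nat).
  have XYw : w \in <[x]> <*> <[y]>.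
    by rewrite groupM // groupX // mem_gen // inE ?cycle_id ?orbT.
  have Vw : w \in V := subsetP sXYV w XYw.
  have thw : theta w = theta v.
    rewrite /w thM ?groupX // !(thX thM) // thx thy.
    apply/matrixP => i j; rewrite !mxE !mulmxnE !mxE (ord1 i).
    case: j => [[|[|j]] lt] //=.
    - rewrite mul0rn addr0 natr_Zp.
      by congr (theta v _ _); apply: val_inj.
    - rewrite mul0rn add0r natr_Zp.
      by congr (theta v _ _); apply: val_inj.
  have -> : v = w * (w^-1 * v) by rewrite mulKVg.
  rewrite mem_mulg // inT2 ?groupM ?groupV // thM ?groupV // (thV thM) //.
  by rewrite thw addNr.
have cpXY : (<[x]> <*> <[y]>) \* T = V.
  by rewrite cprodE ?defV2 // (subset_trans cTV) // centS.
have eV' : [~: V, V] = <[ [~ x, y] ]>.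
  have := der_cprod 1 cpXY; rewrite (derG1P abT) cprodg1 -derg1 => <-.
  apply: der1_joing_cycles.
  apply: (subsetP (centS sXYV)); apply: (subsetP cTV).
  by apply: inT2; rewrite ?groupR // (thR thM).
have cardV' : #|[~: V, V]| <= p.
  rewrite eV' -orderE; apply: dvdn_leq; first exact: prime_gt0.
  have Txy : [~ x, y] \in T by apply: inT2; rewrite ?groupR // (thR thM).
  have Txp : x ^+ p \in T by apply: inT2; rewrite ?groupX // thP.
  rewrite order_dvdn -commXg; last exact: cZ Txy Vx.
  by apply/commgP; apply: commute_sym; apply: cZ Txp Vy.
have sE1N : E1 \subset 'N(E1) := normG E1.
have InnAE : InnA E1 = conj_aut E1 @* E1 by rewrite morphimEsub.
have AutN : Aut E1 \subset 'N(conj_aut E1 @* E1).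
  apply/subsetP => a Aa; rewrite inE; apply/subsetP => _ /imsetP[i Ii ->].
  case/morphimP: Ii => e Ne E1e ->.
  have E1ae : a e \in E1 := Aut_closed Aa E1e.
  have -> : conj_aut E1 e ^ a = conj_aut E1 (a e).
    apply: (eq_Aut (A := E1)).
    - by rewrite groupJ ?Aut_aut.
    - exact: Aut_aut.
    move=> z E1z; rewrite conjgE !permM.
    have Aai : a^-1 \in Aut E1 by rewrite groupV.
    have E1z' : a^-1 z \in E1 := Aut_closed Aai E1z.
    have hJ := morphJ (autm Aa) E1z' E1e; rewrite /= !autmE in hJ.
    by rewrite conj_autE // hJ permKV conj_autE.
  by apply: mem_morphim => //; apply: (subsetP sE1N).
have AutF_Aut : AutF F E1 \subset Aut E1.
  by apply/subsetP => b; rewrite inE => /andP[].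
have sXA : [set b in AutF F E1 | p.-elt b] \subset AutF F E1.
  by apply/subsetP => b; rewrite inE => /andP[].
have OppAut : Opp p (AutF F E1) \subset Aut E1.
  by rewrite gen_subG (subset_trans sXA).
have OppNV : Opp p (AutF F E1) \subset 'N(V | 'P).
  by rewrite gen_subG (subset_trans sXA).
have sXN : [set b in AutF F E1 | p.-elt b] \subset 'N(conj_aut E1 @* E1).
  by rewrite (subset_trans sXA) // (subset_trans AutF_Aut).
have OppN : Opp p (AutF F E1) \subset 'N(conj_aut E1 @* E1).
  by rewrite gen_subG.
rewrite /OutF InnAE in cOpp.
have actT : forall a, a \in Opp p (AutF F E1) ->
    exists2 e, e \in E1 & forall t, t \in T -> a t = t ^ e.
  move=> a Oa; have Na := subsetP OppN a Oa.
  have qa : coset (conj_aut E1 @* E1) a \in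
      Opp p (AutF F E1 / (conj_aut E1 @* E1)).
    have : coset (conj_aut E1 @* E1) a \in
        coset (conj_aut E1 @* E1) @* Opp p (AutF F E1) by apply: mem_morphim.
    rewrite /Opp morphim_gen //; apply: (subsetP (genS _)).
    apply/subsetP => _ /morphimP[b Nb Xb ->].
    move: Xb; rewrite inE => /andP[Ab pb].
    rewrite inE mem_morphim //=; exact: morph_p_elt.
  have := subsetP cOpp _ qa; case/morphimP => c Nc Cc eqac.
  have /(rcoset_kercosetP Na Nc)/rcosetP[i Ii ->] := eqac.
  case/morphimP: Ii => e Ne E1e ->.
  exists e => // t Tt; rewrite permM.
  have tE1 : t \in E1 := subsetP (subset_trans sTV sVE1) t Tt.
  rewrite conj_autE //.
  case/setIP: Cc => _ /astabP h.
  by have := h _ (nTE1 e t E1e Tt).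
have [a Oa tha] := thA' (gm1 p) (gm1SL p).
have Aa : a \in Aut E1 := subsetP OppAut a Oa.
have aV : forall v, v \in V -> a v \in V.
  move=> v Vv; have /astabsP h := subsetP OppNV a Oa.
  by have := h v; rewrite /= Vv.
have [e E1e ae] := actT a Oa.
have nVE1' : V <| E1.
  rewrite /normal sVE1; apply/subsetP => g E1g; rewrite inE.
  by apply/subsetP => _ /imsetP[v Vv ->]; apply: nVE1.
have nTE1' : T <| E1.
  rewrite /normal (subset_trans sTV sVE1); apply/subsetP => g E1g; rewrite inE.
  by apply/subsetP => _ /imsetP[v Vv ->]; apply: nTE1.
pose MG := ([~: V, V] <*> 'Mho^1(T))%G.
have nM : MG <| E1.
  apply: normalY.
  - rewrite -derg1; exact: char_normal_trans (der_char 1 V) nVE1'.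
  - exact: char_normal_trans (Mho_char 1 T) nTE1'.
have nME1 : E1 \subset 'N(MG) by case/andP: nM.
have sV'T : [~: V, V] \subset T.
  rewrite gen_subG; apply/subsetP => _ /imset2P[u v Vu Vv ->].
  by apply: inT2; rewrite ?groupR // (thR thM).
have sMT : MG \subset T by rewrite join_subG sV'T Mho_sub.
have podd : forall g : gT, p.-elt g -> odd #[g].
  by move=> g pg; have [k ->] := p_natP pg; rewrite oddX odd_p orbT.
have keyM : forall v, v \in V -> v ^+ p \in MG.
  move=> v Vv.
  have Vav := aV v Vv.
  have Tz : a v * v \in T.
    by apply: inT2; rewrite ?groupM // thM // tha // gm1act addNr.
  have Tc : [~ v, a v] \in T by apply: inT2; rewrite ?groupR // (thR thM).
  have zp : (a v * v) ^+ p \in MG.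
    apply: (subsetP (joing_subr _ _)); have := Mho_p_elt 1 Tz (mem_p_elt pT Tz).
    by rewrite expn1.
  have cp : [~ v, a v] ^+ 'C(p, 2) \in MG.
    by apply: groupX; apply: (subsetP (joing_subl _ _)); apply: mem_commg.
  rewrite expMg_Rmul in zp; last first.
  - exact: cZ Tc Vav.
  - exact: cZ Tc Vv.
  have hp : a v ^+ p * v ^+ p \in MG.
    by rewrite -(mulgK ([~ v, a v] ^+ 'C(p, 2)) (a v ^+ p * v ^+ p)) groupM ?groupV.
  have E1v : v \in E1 := subsetP sVE1 v Vv.
  have Tw : v ^+ p \in T by apply: inT2; rewrite ?groupX // thP.
  have hav : a v ^+ p = (v ^+ p) ^ e.
    have hX := morphX (autm Aa) p E1v; rewrite /= !autmE in hX.
    by rewrite -hX ae.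
  rewrite hav in hp.
  move: Tw hp; set w := v ^+ p => Tw hp.
  have E1w : w \in E1 := subsetP (subset_trans sTV sVE1) w Tw.
  have Nw : w \in 'N(MG) := subsetP nME1 w E1w.
  have Ne : e \in 'N(MG) := subsetP nME1 e E1e.
  have q1 : coset MG (w ^ e * w) = 1 := coset_id hp.
  rewrite morphM ?groupJ // morphJ // in q1.
  move: q1; set W := coset MG w; set Ee := coset MG e => q1.
  have hWE : W ^ Ee = W^-1 by rewrite (canRL (mulgK W) q1) mul1g.
  have hE2 : forall n, W ^ (Ee ^+ (2 * n)) = W.
    elim => [|n IH]; first by rewrite muln0 expg0 conjg1.
    rewrite mulnS expgD conjgM -{2}IH; congr (_ ^ _).
    by rewrite expgS expg1 conjgM hWE conjVg hWE invgK.
  have hEe : Ee = Ee ^+ (2 * (#[e].+1)./2).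
    rewrite /Ee -morphX // expgM -odd_gen //.
    exact: podd (mem_p_elt pE1 E1e).
  have hW1 : W = W^-1 by rewrite -hWE {1}hEe hE2.
  have hW2 : W ^+ 2 = 1 by rewrite expgS expg1 {2}hW1 mulgV.
  have hW : W = 1.
    rewrite /W (odd_gen (podd w (mem_p_elt pT Tw))).
    have e2 : coset MG (w ^+ 2) = W ^+ 2 := morphX (coset_morphism MG) 2 Nw.
    have e3 : coset MG (w ^+ 2 ^+ (#[w].+1)./2) = coset MG (w ^+ 2) ^+ (#[w].+1)./2
      := morphX (coset_morphism MG) _ (groupX 2 Nw).
    by rewrite e3 e2 hW2 expg1n.
  exact: coset_idr Nw hW.
have sPM : 'Phi(V) \subset MG.
  apply: (Phi_sub_of pV) => // u v Vu Vv.
  by apply: (subsetP (joing_subl _ _)); apply: mem_commg.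
have iTM : #|T : MG| <= p.
  have := Lagrange_index sTV sMT.
  have := dvdn_leq (indexg_gt0 _ _) (indexgS V sPM).
  move=> h1 h2; rewrite -(@leq_pmul2l (p ^ 2)%N) ?expn_gt0 ?prime_gt0 //.
  rewrite -expnSr; apply: leq_trans iV; apply: leq_trans h1.
  by rewrite -h2 leq_mul2r iVT orbT.
have sMJ : MG \subset [~: V, V] <*> 'Phi(T).
  by rewrite join_subG joing_subl (subset_trans _ (joing_subr _ _)) // (Phi_joing pT) joing_subr.
have sJT : [~: V, V] <*> 'Phi(T) \subset T by rewrite join_subG sV'T Phi_sub.
have iTJ : #|T : [~: V, V] <*> 'Phi(T)| <= p.
  by apply: leq_trans iTM; apply: dvdn_leq (indexg_gt0 _ _) (indexgS T sMJ).
have nV'T : T \subset 'N([~: V, V]).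
  apply: subset_trans (subset_trans sTV sVE1) _.
  have : [~: V, V] <| E1 by rewrite -derg1; exact: char_normal_trans (der_char 1 V) nVE1'.
  by case/andP.
split => //; exact: (cyclic_quo_small pr_p pT sV'T nV'T iTJ).
Qed.
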